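(* Let $K=2$ and suppose that for every horizon $T$ (a multiple of $100$) a valid pair $(\eta,\gamma)=(\eta_T,\gamma_T)$ in the non-trivial regime is chosen. Then there exists $T_0$ such that for all $T\ge T_0$, WSU-UX run on the two-phase loss sequence satisfies $$\mathbb{E}[\ln\pi_{T+1,1}+\ln K]\ge c_1,\qquad c_1=\ln\tfrac54>0.$$
   Context: WSU-UX. Fix integers $K\ge 2$ and $T\ge 1$ and hyperparameters $\eta,\gamma$. The pair $(\eta,\gamma)$ is called valid if $\eta,\gamma\in(0,1/2)$ and $\eta K/\gamma\le 1/2$. Given a fixed loss sequence $\ell_t\in[0,1]^K$, WSU-UX sets $\pi_{1,i}=1/K$ and in each round $t$: forms $\tilde\pi_{t,i}=(1-\gamma)\pi_{t,i}+\gamma/K$; draws $I_t$ with $\Pr(I_t=i\mid\mathcal F_{t-1})=\tilde\pi_{t,i}$; sets $\hat\ell_{t,i}=\ell_{t,i}\mathbf 1[I_t=i]/\tilde\pi_{t,i}$; and updates $\pi_{t+1,i}=\pi_{t,i}\bigl(1-\eta(\hat\ell_{t,i}-\sum_{j}\pi_{t,j}\hat\ell_{t,j})\bigr)$; $\mathcal F_t$ is the history generated by $I_1,\dots,I_t$. Non-trivial regime: $\eta\ge T^{-2/3}$ and $\gamma\le T^{-1/3}$. Two-phase loss sequence ($K=2$, $T$ a multiple of $100$, $T_1=T/100$): $\ell_{t,1}=1,\ell_{t,2}=0$ for $1\le t\le T_1$ and $\ell_{t,1}=0,\ell_{t,2}=1$ for $T_1<t\le T$. *)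

(* Defs.v *)
From Stdlib Require Import Reals Lra Lia List Arith.
Import ListNotations.
Open Scope R_scope.

(* Arms are indexed 0..K-1 (arm "1" of the paper is index 0, arm "2" is index 1).
   Round indices t start at 1.  A weight vector is a function nat -> R. *)

Definition sumK (K : nat) (f : nat -> R) : R :=
  fold_right Rplus 0 (map f (seq 0 K)).

Definition valid_pair (K : nat) (eta gamma : R) : Prop :=
  0 < eta < 1/2 /\ 0 < gamma < 1/2 /\ eta * INR K / gamma <= 1/2.

Definition nontrivial_regime (T : nat) (eta gamma : R) : Prop :=
  Rpower (INR T) (-(2/3)) <= eta /\ gamma <= Rpower (INR T) (-(1/3)).

Definition ptilde (K : nat) (gamma : R) (pi : nat -> R) (i : nat) : R :=
  (1 - gamma) * pi i + gamma / INR K.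

Definition lhat (K : nat) (gamma : R) (ell : nat -> nat -> R)
  (pi : nat -> R) (t I i : nat) : R :=
  if Nat.eqb i I then ell t i / ptilde K gamma pi i else 0.

Definition wsu_update (K : nat) (eta gamma : R) (ell : nat -> nat -> R)
  (pi : nat -> R) (t I : nat) : nat -> R :=
  fun i => pi i * (1 - eta * (lhat K gamma ell pi t I i
                   - sumK K (fun j => pi j * lhat K gamma ell pi t I j))).

(* expect K eta gamma ell t n pi f = E[ f(pi_{t+n}) | pi_t = pi ],
   the expectation over the draws I_t, ..., I_{t+n-1}. *)
Fixpoint wsu_expect (K : nat) (eta gamma : R) (ell : nat -> nat -> R)
  (t n : nat) (pi : nat -> R) (f : (nat -> R) -> R) : R :=
  match n with
  | O => f pi
  | S n' => sumK K (fun I => ptilde K gamma pi I *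
              wsu_expect K eta gamma ell (S t) n' (wsu_update K eta gamma ell pi t I) f)
  end.

Definition pi_init (K : nat) : nat -> R := fun _ => 1 / INR K.

Definition two_phase (T : nat) (t i : nat) : R :=
  if Nat.leb t (T / 100) then (if Nat.eqb i 0 then 1 else 0)
  else (if Nat.eqb i 0 then 0 else 1).

(* Main.v *)
Require Import Defs.
From Stdlib Require Import Reals Lra Lia.
Open Scope R_scope.
Lemma alg1 eta p0 p1 a b : 0 < eta -> 0 < p0 -> 0 < p1 -> p0 + p1 = 1 -> a + b = 1 -> 2*eta <= a -> 0 <= b ->
  0 < p0*(1 - eta*(1/a - p0*(1/a))) /\ 0 < p1*(1-eta*(0 - p0*(1/a))) /\
  p0*(1 - eta*(1/a - p0*(1/a))) + p1*(1-eta*(0 - p0*(1/a))) = 1 /\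
  a * (p1*(1-eta*(0 - p0*(1/a))) / (p0*(1 - eta*(1/a - p0*(1/a))))) + b*(p1/p0) <= (1+2*eta)*(p1/p0).
Proof.
  intros He H0 H1 Hs Hab Ha Hb.
  assert (Hapos : 0 < a) by lra.
  assert (E0 : p0*(1 - eta*(1/a - p0*(1/a))) = p0 * (a - eta*p1) / a) by (replace p1 with (1-p0) by lra; field; lra).
  assert (E1 : p1*(1-eta*(0 - p0*(1/a))) = p1 * (a + eta*p0) / a) by (field; lra).
  assert (Hd : 0 < a - eta*p1) by nra.
  rewrite E0, E1. repeat split.
  - apply Rdiv_lt_0_compat; nra.
  - apply Rdiv_lt_0_compat; nra.
  - field_simplify; [|lra]. apply Rminus_diag_uniq. field_simplify; [|lra].
    replace p0 with (1 - p1) by lra. field_simplify; lra.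
  - replace (a * (p1 * (a + eta * p0) / a / (p0 * (a - eta * p1) / a)))
      with ((p1/p0) * (a * (a + eta*p0) / (a - eta*p1))) by (field; repeat split; lra).
    assert (Hk : a * (a + eta*p0) / (a - eta*p1) <= a + 2*eta).
    { apply (Rmult_le_reg_r (a - eta*p1)); [lra|].
      replace (a * (a + eta*p0) / (a - eta*p1) * (a - eta*p1)) with (a * (a + eta*p0)) by (field; lra).
      replace p0 with (1-p1) by lra. nra. }
    assert (Hw : 0 < p1/p0) by (apply Rdiv_lt_0_compat; lra).
    nra.
Qed.

Lemma alg2 eta p0 p1 a b : 0 < eta -> 0 < p0 -> 0 < p1 -> p0 + p1 = 1 -> a + b = 1 -> 2*eta <= b -> 0 <= a ->
  0 < p0 * (1 - eta * (0 - p1 * (1 / b))) /\ 0 < p1 * (1 - eta * (1/b - p1 * (1/b))) /\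
  p0 * (1 - eta * (0 - p1 * (1 / b))) + p1 * (1 - eta * (1/b - p1 * (1/b))) = 1 /\
  a*(p1/p0) + b * (p1 * (1 - eta * (1/b - p1 * (1/b))) / (p0 * (1 - eta * (0 - p1 * (1 / b))))) <= (1 - 2*eta/3)*(p1/p0).
Proof.
  intros He H0 H1 Hs Hab Ha Hb.
  assert (Hbpos : 0 < b) by lra.
  assert (E0 : p0 * (1 - eta * (0 - p1 * (1 / b))) = p0 * (b + eta*p1) / b) by (field; lra).
  assert (E1 : p1 * (1 - eta * (1/b - p1 * (1/b))) = p1 * (b - eta*p0) / b).
  { replace p0 with (1-p1) by lra. field; lra. }
  assert (Hd : 0 < b - eta*p0) by nra.
  rewrite E0, E1. repeat split.
  - apply Rdiv_lt_0_compat; nra.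
  - apply Rdiv_lt_0_compat; nra.
  - field_simplify; [|lra]. apply Rminus_diag_uniq. field_simplify; [|lra].
    replace p0 with (1 - p1) by lra. field_simplify; lra.
  - replace (b * (p1 * (b - eta * p0) / b / (p0 * (b + eta * p1) / b)))
      with ((p1/p0) * (b * (b - eta*p0) / (b + eta*p1))) by (field; repeat split; nra).
    assert (Hk : b * (b - eta*p0) / (b + eta*p1) <= b - 2*eta/3).
    { apply (Rmult_le_reg_r (b + eta*p1)); [nra|].
      replace (b * (b - eta*p0) / (b + eta*p1) * (b + eta*p1)) with (b * (b - eta*p0)) by (field; nra).
      replace p0 with (1-p1) by lra. nra. }
    assert (Hw : 0 < p1/p0) by (apply Rdiv_lt_0_compat; lra).
    nra.
Qed.

Definition wf (pi : nat -> R) : R := pi 1%nat / pi 0%nat.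
Definition invp (pi : nat -> R) : Prop := 0 < pi 0%nat /\ 0 < pi 1%nat /\ pi 0%nat + pi 1%nat = 1.

Lemma ptilde2 g pi i : ptilde 2 g pi i = (1 - g) * pi i + g / 2.
Proof. unfold ptilde. replace (INR 2) with 2 by (simpl; lra). reflexivity. Qed.

Section S.
Variables (eta gamma : R) (T : nat).
Hypotheses (Heta : 0 < eta) (Hg : 0 < gamma < 1/2) (Hv : eta * 2 / gamma <= 1/2).

Lemma eta_small : 4 * eta <= gamma.
Proof.
  assert (eta * 2 / gamma * gamma <= 1/2 * gamma) by (apply Rmult_le_compat_r; lra).
  replace (eta * 2 / gamma * gamma) with (eta*2) in H by (field; lra). lra.
Qed.

Let ell := two_phase T.
Let upd pi t I := wsu_update 2 eta gamma ell pi t I.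

Lemma upd00 pi t : upd pi t 0 0 = pi 0%nat * (1 - eta * (ell t 0%nat / ptilde 2 gamma pi 0 - pi 0%nat * (ell t 0%nat / ptilde 2 gamma pi 0))).
Proof. unfold upd, wsu_update, lhat, sumK. simpl. ring. Qed.
Lemma upd01 pi t : upd pi t 0 1 = pi 1%nat * (1 - eta * (0 - pi 0%nat * (ell t 0%nat / ptilde 2 gamma pi 0))).
Proof. unfold upd, wsu_update, lhat, sumK. simpl. ring. Qed.
Lemma upd10 pi t : upd pi t 1 0 = pi 0%nat * (1 - eta * (0 - pi 1%nat * (ell t 1%nat / ptilde 2 gamma pi 1))).
Proof. unfold upd, wsu_update, lhat, sumK. simpl. ring. Qed.
Lemma upd11 pi t : upd pi t 1 1 = pi 1%nat * (1 - eta * (ell t 1%nat / ptilde 2 gamma pi 1 - pi 1%nat * (ell t 1%nat / ptilde 2 gamma pi 1))).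
Proof. unfold upd, wsu_update, lhat, sumK. simpl. ring. Qed.

Definition rr t := if Nat.leb t (T/100) then 1 + 2*eta else 1 - 2*eta/3.

Lemma step pi t : invp pi -> invp (upd pi t 0) /\ invp (upd pi t 1) /\
  ptilde 2 gamma pi 0 * wf (upd pi t 0) + ptilde 2 gamma pi 1 * wf (upd pi t 1) <= rr t * wf pi.
Proof.
  intros [H0 [H1 Hs]]. unfold invp, wf, rr.
  rewrite !upd00, !upd01, !upd10, !upd11, !ptilde2.
  pose proof eta_small as Hes.
  set (p0 := pi 0%nat) in *. set (p1 := pi 1%nat) in *.
  assert (Hab : (1 - gamma) * p0 + gamma / 2 + ((1 - gamma) * p1 + gamma / 2) = 1) by nra.
  assert (Ha : 2 * eta <= (1 - gamma) * p0 + gamma / 2) by nra.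
  assert (Hb : 2 * eta <= (1 - gamma) * p1 + gamma / 2) by nra.
  unfold ell, two_phase. destruct (Nat.leb t (T/100)) eqn:Ht; simpl.
  - set (a := (1 - gamma) * p0 + gamma / 2) in *. set (b := (1 - gamma) * p1 + gamma / 2) in *.
    replace (p0 * (1 - eta * (0 - p1 * (0 / b)))) with p0 by (unfold Rdiv; ring).
    replace (p1 * (1 - eta * (0 / b - p1 * (0 / b)))) with p1 by (unfold Rdiv; ring).
    destruct (alg1 eta p0 p1 a b) as [A1 [A2 [A3 A4]]]; try lra.
    all: repeat split; lra.
  - set (a := (1 - gamma) * p0 + gamma / 2) in *. set (b := (1 - gamma) * p1 + gamma / 2) in *.
    replace (p0 * (1 - eta * (0 / a - p0 * (0 / a)))) with p0 by (unfold Rdiv; ring).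
    replace (p1 * (1 - eta * (0 - p0 * (0 / a)))) with p1 by (unfold Rdiv; ring).
    destruct (alg2 eta p0 p1 a b) as [A1 [A2 [A3 A4]]]; try lra.
    all: repeat split; lra.
Qed.

Fixpoint AA t n := match n with O => 1 | S n => rr t * AA (S t) n end.

Lemma AA_nonneg t n : 0 <= AA t n.
Proof.
  pose proof eta_small. revert t; induction n; intros t; simpl; [lra|].
  apply Rmult_le_pos; [unfold rr; destruct (Nat.leb t (T/100)); lra | apply IHn].
Qed.

Lemma ln_ge y : 0 < y -> 1 - / y <= ln y.
Proof.
  intros Hy. pose proof (exp_ineq1_le (- ln y)).
  rewrite exp_Ropp, exp_ln in H by exact Hy. lra.
Qed.

Lemma main_ind : forall n t pi, invp pi ->
  wsu_expect 2 eta gamma ell t n pi (fun pi => ln (pi 0%nat) + ln (INR 2))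
    >= ln (INR 2) - AA t n * wf pi.
Proof.
  induction n; intros t pi Hi.
  - simpl. destruct Hi as [H0 [H1 Hs]]. pose proof (ln_ge _ H0). unfold wf.
    replace (/ pi 0%nat) with ((pi 0%nat + pi 1%nat) / pi 0%nat) in H by (rewrite Hs; field; lra).
    replace ((pi 0%nat + pi 1%nat) / pi 0%nat) with (1 + pi 1%nat / pi 0%nat) in H by (field; lra).
    lra.
  - destruct (step pi t Hi) as [I0 [I1 Hst]].
    pose proof (IHn (S t) _ I0) as E0. pose proof (IHn (S t) _ I1) as E1.
    change (wsu_expect 2 eta gamma ell t (S n) pi (fun pi => ln (pi 0%nat) + ln (INR 2)))
      with (ptilde 2 gamma pi 0 * wsu_expect 2 eta gamma ell (S t) n (upd pi t 0) (fun pi => ln (pi 0%nat) + ln (INR 2))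
          + (ptilde 2 gamma pi 1 * wsu_expect 2 eta gamma ell (S t) n (upd pi t 1) (fun pi => ln (pi 0%nat) + ln (INR 2)) + 0)).
    simpl AA.
    pose proof (AA_nonneg (S t) n) as HA.
    destruct Hi as [H0 [H1 Hs]]. rewrite !ptilde2 in *. pose proof eta_small.
    assert (P0 : 0 <= (1 - gamma) * pi 0%nat + gamma / 2) by nra.
    assert (P1 : 0 <= (1 - gamma) * pi 1%nat + gamma / 2) by nra.
    assert (PS : (1 - gamma) * pi 0%nat + gamma / 2 + ((1 - gamma) * pi 1%nat + gamma / 2) = 1) by nra.
    set (a := (1 - gamma) * pi 0%nat + gamma / 2) in *. set (b := (1 - gamma) * pi 1%nat + gamma / 2) in *.
    set (L := ln (INR 2)) in *.
    set (X0 := wsu_expect _ _ _ _ _ _ (upd pi t 0) _) in *.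
    set (X1 := wsu_expect _ _ _ _ _ _ (upd pi t 1) _) in *.
    assert (a * X0 >= a * (L - AA (S t) n * wf (upd pi t 0))) by (apply Rle_ge, Rmult_le_compat_l; lra).
    assert (b * X1 >= b * (L - AA (S t) n * wf (upd pi t 1))) by (apply Rle_ge, Rmult_le_compat_l; lra).
    assert (AA (S t) n * (a * wf (upd pi t 0) + b * wf (upd pi t 1)) <= AA (S t) n * (rr t * wf pi))
      by (apply Rmult_le_compat_l; lra).
    nra.
Qed.

End S.
Lemma AA_late eta T t n : (T/100 < t)%nat -> AA eta T t n = (1 - 2*eta/3)^n.
Proof.
  revert t; induction n; intros t Ht; simpl; [reflexivity|].
  rewrite IHn by lia. unfold rr.
  replace (Nat.leb t (T/100)) with false by (symmetry; apply Nat.leb_gt; lia). reflexivity.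
Qed.

Lemma AA_early eta T k : forall t m, (t + k <= T/100 + 1)%nat ->
  AA eta T t (k + m) = (1 + 2*eta)^k * AA eta T (t + k) m.
Proof.
  induction k; intros t m H.
  - simpl. rewrite Nat.add_0_r. ring.
  - simpl. rewrite IHk by lia. unfold rr.
    replace (Nat.leb t (T/100)) with true by (symmetry; apply Nat.leb_le; lia).
    replace (S t + k)%nat with (t + S k)%nat by lia. ring.
Qed.

Lemma bern x n : 0 <= x -> 1 + INR n * x <= (1 + x)^n.
Proof.
  intros Hx. induction n; [simpl; lra|].
  rewrite S_INR. simpl pow.
  assert (0 <= INR n) by apply pos_INR.
  assert (0 <= INR n * x) by nra. nra.
Qed.
Lemma numer eta n : 0 < eta < 1/8 ->
  (1 + 2*eta)^n * (1 - 2*eta/3)^(99*n) <= / (1 + 64*eta*INR n).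
Proof.
  intros He. set (y := 2*eta/3).
  assert (Hy : 0 < y < 1/10) by (unfold y; lra).
  set (c := (1 + 2*eta) * (1-y)^99).
  assert (Hc0 : 0 <= c) by (unfold c; apply Rmult_le_pos; [lra| apply pow_le; lra]).
  assert (Hc : c * (1 + 64*eta) <= 1).
  { assert (B1 : (1 + y)^96 >= 1 + 96*y).
    { pose proof (bern y 96 ltac:(lra)). rewrite INR_IZR_INZ in H. simpl in H. lra. }
    assert (B2 : (1+y)^3 >= 1 + 3*y) by (simpl; nra).
    assert (B3 : (1+y)^99 = (1+y)^3 * (1+y)^96) by (rewrite <- pow_add; reflexivity).
    assert (B4 : (1-y)^99 * (1+y)^99 <= 1).
    { rewrite <- Rpow_mult_distr. replace ((1-y)*(1+y)) with (1 - y*y) by ring.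
      rewrite <- (pow1 99). apply pow_incr. nra. }
    assert (B5 : 0 <= (1-y)^99) by (apply pow_le; lra).
    assert (B6 : (1+2*eta)*(1+64*eta) <= (1+y)^99).
    { rewrite B3. assert (0 <= (1+y)^96) by (apply pow_le; lra).
      replace (1+2*eta) with (1+3*y) by (unfold y; field).
      replace (1+64*eta) with (1+96*y) by (unfold y; field).
      apply Rle_trans with ((1+3*y)*(1+y)^96).
      - apply Rmult_le_compat_l; lra.
      - apply Rmult_le_compat_r; lra. }
    unfold c. 
    apply Rle_trans with ((1-y)^99 * (1+y)^99); [|exact B4].
    replace ((1 + 2 * eta) * (1 - y) ^ 99 * (1 + 64 * eta)) with ((1-y)^99 * ((1 + 2 * eta) * (1 + 64 * eta))) by ring.
    apply Rmult_le_compat_l; lra. }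
  assert (E : (1 + 2*eta)^n * (1 - y)^(99*n) = c^n).
  { unfold c. rewrite Rpow_mult_distr, pow_mult. reflexivity. }
  fold y. rewrite E.
  assert (Hc' : c <= / (1 + 64*eta)).
  { apply (Rmult_le_reg_r (1+64*eta)); [lra|]. rewrite Rinv_l by lra. lra. }
  apply Rle_trans with ((/ (1 + 64*eta))^n).
  - apply pow_incr. lra.
  - rewrite pow_inv. apply Rinv_le_contravar.
    + pose proof (pos_INR n). assert (0 <= eta * INR n) by (apply Rmult_le_pos; lra). lra.
    + pose proof (bern (64*eta) n ltac:(lra)). lra.
Qed.

Lemma rp1000 : Rpower 1000 (1/3) = 10.
Proof.
  replace 1000 with (Rpower 10 (INR 3)) by (rewrite Rpower_pow by lra; simpl; ring).
  rewrite Rpower_mult. replace (INR 3 * (1/3)) with 1 by (simpl; field).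
  apply Rpower_1. lra.
Qed.

Theorem claim1 (eta gamma : nat -> R)
  (Hpar : forall T : nat, (1 <= T)%nat -> Nat.modulo T 100 = 0%nat ->
     valid_pair 2 (eta T) (gamma T) /\ nontrivial_regime T (eta T) (gamma T)) :
  exists T0 : nat, forall T : nat, (T0 <= T)%nat -> (1 <= T)%nat ->
    Nat.modulo T 100 = 0%nat ->
    wsu_expect 2 (eta T) (gamma T) (two_phase T) 1 T (pi_init 2)
      (fun pi => ln (pi 0%nat) + ln (INR 2)) >= ln (5/4).
Proof.
  exists 1000%nat. intros T HT H1 Hm.
  destruct (Hpar T H1 Hm) as [[He [Hg Hv]] [Hn _]].
  set (e := eta T) in *. set (g := gamma T) in *.
  replace (INR 2) with 2 in Hv by (simpl; lra).
  pose proof (eta_small e g Hg Hv) as Hes.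
  set (T1 := (T / 100)%nat).
  assert (HT1 : T = (T1 + 99 * T1)%nat).
  { pose proof (Nat.div_mod T 100 ltac:(lia)). unfold T1. lia. }
  assert (Hinv : invp (pi_init 2)).
  { unfold invp, pi_init. simpl. lra. }
  pose proof (main_ind e g T (proj1 He) Hg Hv T 1 (pi_init 2) Hinv) as M.
  assert (Hw : wf (pi_init 2) = 1) by (unfold wf, pi_init; simpl; field).
  rewrite Hw, Rmult_1_r in M.
  assert (HA : AA e T 1 T = (1 + 2*e)^T1 * (1 - 2*e/3)^(99*T1)).
  { rewrite HT1 at 2. rewrite AA_early by (unfold T1; lia).
    rewrite AA_late by (unfold T1; lia). reflexivity. }
  pose proof (numer e T1 ltac:(lra)) as N.
  assert (HINR : 0 < INR T) by (apply lt_0_INR; lia).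
  assert (HeT : 10 <= e * INR T).
  { apply Rle_trans with (Rpower (INR T) (-(2/3)) * INR T).
    - replace (Rpower (INR T) (-(2/3)) * INR T) with (Rpower (INR T) (1/3)).
      + rewrite <- rp1000. apply Rle_Rpower_l; [lra|]. split; [lra|].
        replace 1000 with (INR 1000) by (rewrite INR_IZR_INZ; reflexivity). apply le_INR. lia.
      + assert (Q : Rpower (INR T) (-(2/3)) * Rpower (INR T) 1 = Rpower (INR T) (1/3))
          by (rewrite <- Rpower_plus; f_equal; field).
        rewrite Rpower_1 in Q by exact HINR. symmetry. exact Q.
    - apply Rmult_le_compat_r; lra. }
  assert (HTT : INR T = 100 * INR T1).
  { rewrite HT1. rewrite plus_INR, mult_INR. simpl. ring. }
  assert (Hk : / (1 + 64 * e * INR T1) <= 3/8).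
  { rewrite HTT in HeT. rewrite <- (Rinv_inv (3/8)). apply Rinv_le_contravar; [lra|]. 
    replace (/ (3/8)) with (8/3) by field.
    assert (e * INR T1 >= 1/10) by lra. lra. }
  assert (Hl : 3/8 <= ln 2 - ln (5/4)).
  { replace 2 with ((5/4) * (8/5)) at 1 by field. rewrite ln_mult by lra.
    pose proof (ln_ge (8/5) ltac:(lra)).
    replace (/ (8/5)) with (5/8) in H by field. lra. }
  replace (INR 2) with 2 in M by (simpl; lra).
  replace (INR 2) with 2 by (simpl; lra).
  unfold e, g in *. lra.
Qed.
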